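(* Let $(\mathbf{x},y)\in\mathcal{X}\times\{1,\dots,c\}$, let $\mathbb{F}_s:\mathcal{X}\to\{1,\dots,c\}$ be a single-label classifier, let $\mathcal{R}$ be a set of patch regions and let $\mathcal{M}$ be an $\mathcal{R}$-covering mask set. Let $\boldsymbol{\lambda}\in\{0,1\}^{\mathcal{M}}$ be the array returned by DoubleMaskingCert$(\mathbf{x},y,\mathbb{F}_s,\mathcal{R},\mathcal{M})$. If $\mathbf{m}^*\in\mathcal{M}$ satisfies $\boldsymbol{\lambda}[\mathbf{m}^*]=1$, then for every patch region $\mathbf{r}\in\mathcal{R}$ that is covered by $\mathbf{m}^*$ (i.e. $\mathbf{m}^*[i,j]\le\mathbf{r}[i,j]$ for all $(i,j)$) and every $\mathbf{x}''\in\mathcal{X}$, $$\mathrm{DoubleMaskingInfer}(\mathbf{r}\circ\mathbf{x}+(\mathbf{1}-\mathbf{r})\circ\mathbf{x}'',\ \mathbb{F}_s,\ \mathcal{M})=y,$$ regardless of how ties in the majority vote and the iteration order over disagreers are resolved.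
   Context: Images lie in $\mathcal{X}\subseteq\mathbb{R}^{w\times h\times\gamma}$; patch regions and masks are binary matrices in $\{0,1\}^{w\times h}$ with entries $0$ inside the region/mask and $1$ outside; $\circ$ is entrywise product (broadcast over channels). A mask set $\mathcal{M}$ is $\mathcal{R}$-covering if for every $\mathbf{r}\in\mathcal{R}$ there is $\mathbf{m}\in\mathcal{M}$ with $\mathbf{m}[i,j]\le\mathbf{r}[i,j]$ for all $(i,j)$. MaskPred$(\mathbf{z},\mathbb{F}_s,\mathcal{M})$: form $\mathcal{P}=\{(\mathbf{m},\mathbb{F}_s(\mathbf{z}\circ\mathbf{m})):\mathbf{m}\in\mathcal{M}\}$; let $\hat{y}_{maj}$ be a label attaining the maximum of $|\{(\mathbf{m},\hat y)\in\mathcal{P}:\hat y=y^*\}|$ over $y^*$ (ties broken arbitrarily); let $\mathcal{P}_{dis}=\{(\mathbf{m},\hat y)\in\mathcal{P}:\hat y\ne\hat y_{maj}\}$; return $(\hat y_{maj},\mathcal{P}_{dis})$. DoubleMaskingInfer$(\mathbf{z},\mathbb{F}_s,\mathcal{M})$: compute $(\hat y_{maj},\mathcal{P}_{dis})=$MaskPred$(\mathbf{z},\mathbb{F}_s,\mathcal{M})$. If $\mathcal{P}_{dis}=\emptyset$, return $\hat y_{maj}$. Otherwise, iterate over $(\mathbf{m}_{dis},\hat y_{dis})\in\mathcal{P}_{dis}$ in some order; for each compute $(\hat y',\mathcal{P}')=$MaskPred$(\mathbf{z}\circ\mathbf{m}_{dis},\mathbb{F}_s,\mathcal{M})$ and if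 $\mathcal{P}'=\emptyset$ return $\hat y_{dis}$. If no disagreer returned, return $\hat y_{maj}$. DoubleMaskingCert$(\mathbf{x},y,\mathbb{F}_s,\mathcal{R},\mathcal{M})$: if $\mathcal{M}$ is not $\mathcal{R}$-covering, return $(0,\mathbf{0})$. Otherwise initialize $\boldsymbol{\lambda}[\mathbf{m}]=1$ for all $\mathbf{m}\in\mathcal{M}$ and $certVal=1$; for every ordered pair $(\mathbf{m}_0,\mathbf{m}_1)\in\mathcal{M}\times\mathcal{M}$, if $\mathbb{F}_s(\mathbf{x}\circ\mathbf{m}_0\circ\mathbf{m}_1)\ne y$ then set $certVal=0$, $\boldsymbol{\lambda}[\mathbf{m}_0]=0$, $\boldsymbol{\lambda}[\mathbf{m}_1]=0$. Return $(certVal,\boldsymbol{\lambda})$. (Thus $\boldsymbol{\lambda}[\mathbf{m}^*]=1$ iff $\mathbb{F}_s(\mathbf{x}\circ\mathbf{m}^*\circ\mathbf{m})=y$ and $\mathbb{F}_s(\mathbf{x}\circ\mathbf{m}\circ\mathbf{m}^* )=y$ for all $\mathbf{m}\in\mathcal{M}$, given $\mathcal{M}$ is $\mathcal{R}$-covering.) *)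

(* Defs.v *)
From HB Require Import structures.
From mathcomp Require Import all_boot all_order all_algebra.
From mathcomp Require Import reals.
Set Implicit Arguments. Unset Strict Implicit. Unset Printing Implicit Defensive.
Import Order.TTheory GRing.Theory Num.Theory.
Local Open Scope ring_scope.

Definition pimage (R : realType) (w h g : nat) := 'I_w -> 'I_h -> 'I_g -> R.

(* Binary w x h matrices (patch regions and masks):
   false = 0 (inside the region/pmask), true = 1 (outside). *)
Definition pmask (w h : nat) := 'M[bool]_(w, h).
Arguments pimage : clear implicits.
Arguments pmask : clear implicits.

Definition mask_img (R : realType) w h g (z : pimage R w h g) (m : pmask w h)
  : pimage R w h g :=
  fun i j k => (m i j : nat)%:R * z i j k.

Definition patch_img (R : realType) w h g (r : pmask w h) (x x'' : pimage R w h g)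
  : pimage R w h g :=
  fun i j k => (r i j : nat)%:R * x i j k + (1 - (r i j : nat)%:R) * x'' i j k.

Definition mask_le w h (m r : pmask w h) : bool :=
  [forall i, forall j, (m i j : nat) <= (r i j : nat)]%N.

Definition covering w h (Rg M : {set pmask w h}) : bool :=
  [forall r in Rg, exists m in M, mask_le m r].

Section MaskPred.
Variables (R : realType) (w h g c : nat).
Variable F : pimage R w h g -> 'I_c.
Variable M : {set pmask w h}.

Definition pred_count (z : pimage R w h g) (ys : 'I_c) : nat :=
  #|[set m in M | F (mask_img z m) == ys]|.

(* yhat attains the maximum of the vote count (any tie-breaking is allowed). *)
Definition is_majority (z : pimage R w h g) (yh : 'I_c) : Prop :=
  forall ys, (pred_count z ys <= pred_count z yh)%N.

(* P_dis (identified with its set of masks; the label of a pair (m, _)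
   is F (z o m)). *)
Definition disagreers (z : pimage R w h g) (yh : 'I_c) : {set pmask w h} :=
  [set m in M | F (mask_img z m) != yh].

(* Iteration over the disagreers in the order s; for each m_dis the inner
   MaskPred uses the majority label ch m_dis (tie-breaking choice). *)
Fixpoint dm_run (z : pimage R w h g) (ch : pmask w h -> 'I_c) (yh : 'I_c)
    (s : seq (pmask w h)) : 'I_c :=
  match s with
  | [::] => yh
  | m :: s' =>
      if disagreers (mask_img z m) (ch m) == set0 then F (mask_img z m)
      else dm_run z ch yh s'
  end.

(* o is a possible output of DoubleMaskingInfer(z, F, M) for SOME resolution
   of majority ties (outer and inner) and SOME iteration order over P_dis. *)
Definition dm_infer_out (z : pimage R w h g) (o : 'I_c) : Prop :=
  exists yh, is_majority z yh /\
  exists s : seq (pmask w h), perm_eq s (enum (disagreers z yh)) /\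
  exists ch : pmask w h -> 'I_c,
    (forall m, is_majority (mask_img z m) (ch m)) /\
    o = dm_run z ch yh s.

End MaskPred.

Definition dm_cert (R : realType) w h g c (x : pimage R w h g) (y : 'I_c)
    (F : pimage R w h g -> 'I_c) (Rg M : {set pmask w h})
  : bool * (pmask w h -> bool) :=
  if ~~ covering Rg M then (false, fun _ => false) else
  foldl (fun (st : bool * (pmask w h -> bool)) (p : pmask w h * pmask w h) =>
           let: (cv, lam) := st in
           let: (m0, m1) := p in
           if F (mask_img (mask_img x m0) m1) != y then
             (false, fun m => if (m == m0) || (m == m1) then false else lam m)
           else (cv, lam))
        (true, fun _ => true)
        [seq (m0, m1) | m0 <- enum M, m1 <- enum M].

(* Main.v *)
Require Import Defs.
From HB Require Import structures.
From mathcomp Require Import all_boot all_order all_algebra.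
From mathcomp Require Import reals.
From Stdlib Require Import FunctionalExtensionality.
Set Implicit Arguments. Unset Strict Implicit. Unset Printing Implicit Defensive.
Import Order.TTheory GRing.Theory Num.Theory.

Section Aux.
Variables (R : realType) (w h g c : nat).

Lemma mask_idem (u : pimage R w h g) (m : pmask w h) :
  mask_img (mask_img u m) m = mask_img u m.
Proof.
apply: functional_extensionality => i; apply: functional_extensionality => j;
apply: functional_extensionality => k; rewrite /mask_img.
by case: (m i j) => /=; rewrite ?mul0r ?mul1r.
Qed.

Lemma mask_comm (u : pimage R w h g) (m m' : pmask w h) :
  mask_img (mask_img u m) m' = mask_img (mask_img u m') m.
Proof.
apply: functional_extensionality => i; apply: functional_extensionality => j;
apply: functional_extensionality => k; rewrite /mask_img.
by rewrite mulrCA.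
Qed.

Lemma patch_mask (r m : pmask w h) (x x'' : pimage R w h g) :
  mask_le m r -> mask_img (patch_img r x x'') m = mask_img x m.
Proof.
move=> /forallP H.
apply: functional_extensionality => i; apply: functional_extensionality => j;
apply: functional_extensionality => k; rewrite /mask_img /patch_img.
have := forallP (H i) j.
by case: (m i j); case: (r i j) => //= _; rewrite ?mul0r ?mul1r ?subrr ?mul0r ?addr0.
Qed.

Lemma cert_fold (x : pimage R w h g) (y : 'I_c) (F : pimage R w h g -> 'I_c)
  (l : seq (pmask w h * pmask w h)) st m :
  (foldl (fun (st : bool * (pmask w h -> bool)) (p : pmask w h * pmask w h) =>
           let: (cv, lam) := st in
           let: (m0, m1) := p in
           if F (mask_img (mask_img x m0) m1) != y then
             (false, fun m => if (m == m0) || (m == m1) then false else lam m)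
           else (cv, lam)) st l).2 m = true ->
  st.2 m = true /\ forall p, p \in l -> F (mask_img (mask_img x p.1) p.2) != y ->
     (m != p.1) && (m != p.2).
Proof.
elim: l st => [|[m0 m1] l IH] [cv lam] /=.
  by move=> ->; split.
case: ifP => Hf /IH /= [H1 H2]; last first.
  split=> // p; rewrite inE => /orP [/eqP -> /=|]; [by rewrite Hf | exact: H2].
move: H1; case: ifP => // Hm Hl; split=> // p; rewrite inE => /orP [/eqP -> /=|].
  by move: Hm => /norP [-> ->].
exact: H2.
Qed.

Lemma run_y (z : pimage R w h g) (F : pimage R w h g -> 'I_c) (M : {set pmask w h})
  (ch : pmask w h -> 'I_c) (y yh : 'I_c) (s : seq (pmask w h)) :
  (forall m, m \in s -> disagreers F M (mask_img z m) (ch m) == set0 ->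
     F (mask_img z m) = y) ->
  (yh = y \/ exists2 m, m \in s & disagreers F M (mask_img z m) (ch m) == set0) ->
  dm_run F M z ch yh s = y.
Proof.
elim: s => [|m s IH] /= Ha Hb.
  by case: Hb => // [[m]].
case: ifP => Hc; first by apply: Ha; rewrite ?inE ?eqxx.
apply: IH; first by move=> m' Hm'; apply: Ha; rewrite inE Hm' orbT.
case: Hb => [->|[m' ]]; first by left.
rewrite inE => /orP [/eqP ->|Hm' Hd]; first by rewrite Hc.
by right; exists m'.
Qed.

End Aux.

Theorem mainTheorem3 (R : realType) (w h g c : nat)
    (x : pimage R w h g) (y : 'I_c) (F : pimage R w h g -> 'I_c)
    (Rg M : {set pmask w h}) (mstar : pmask w h) :
  covering Rg M ->
  mstar \in M ->
  (dm_cert x y F Rg M).2 mstar = true ->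
  forall r : pmask w h, r \in Rg -> mask_le mstar r ->
  forall (x'' : pimage R w h g) (o : 'I_c),
    dm_infer_out F M (patch_img r x x'') o -> o = y.
Proof.
move=> Hcov HmM; rewrite /dm_cert Hcov /= => /cert_fold [_ Hc] r Hr Hle x'' o.
have Hcert : forall m, m \in M ->
    F (mask_img (mask_img x mstar) m) = y /\ F (mask_img (mask_img x m) mstar) = y.
  move=> m Hm; split; apply/eqP; apply/negPn/negP => Hne.
    have := Hc (mstar, m); rewrite allpairs_f ?mem_enum // => /(_ isT Hne).
    by rewrite eqxx.
  have := Hc (m, mstar); rewrite allpairs_f ?mem_enum // => /(_ isT Hne).
  by rewrite eqxx andbF.
set z := patch_img r x x''.
have Hz : mask_img z mstar = mask_img x mstar by exact: patch_mask.
have Hzs : F (mask_img z mstar) = y.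
  by rewrite Hz -mask_idem; case: (Hcert _ HmM).
have Hzm : forall m, m \in M -> F (mask_img (mask_img z mstar) m) = y.
  by move=> m Hm; rewrite Hz; case: (Hcert _ Hm).
have Hzm' : forall m, m \in M -> F (mask_img (mask_img z m) mstar) = y.
  by move=> m Hm; rewrite mask_comm Hzm.
move=> [yh [Hmaj [s [Hperm [ch [Hch ->]]]]]].
apply: run_y.
  move=> m Hm Hd.
  have HmD : m \in disagreers F M z yh by rewrite -mem_enum -(perm_mem Hperm).
  have HmM' : m \in M by move: HmD; rewrite inE => /andP [].
  have Hall : forall m', m' \in M -> F (mask_img (mask_img z m) m') = ch m.
    move=> m' Hm'; apply/eqP; apply/negPn/negP => Hn.
    have HH : m' \in disagreers F M (mask_img z m) (ch m) by rewrite inE Hm' Hn.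
    by move: HH; rewrite (eqP Hd) inE.
  by rewrite -mask_idem (Hall _ HmM') -(Hall _ HmM) Hzm'.
case: (eqVneq yh y) => [->|Hne]; first by left.
right; exists mstar.
  by rewrite (perm_mem Hperm) mem_enum inE HmM Hzs eq_sym Hne.
have Hchy : ch mstar = y.
  apply/eqP; apply/negPn/negP => Hn.
  have := Hch mstar y; rewrite /pred_count.
  have H0 : #|[set m in M | F (mask_img (mask_img z mstar) m) == ch mstar]| = 0%N.
    apply/eqP; rewrite cards_eq0; apply/eqP/setP => m; rewrite !inE.
    case Hm: (m \in M) => //=.
    by rewrite Hzm //; apply/negbTE; rewrite eq_sym.
  rewrite H0 leqn0 cards_eq0 => /eqP/setP/(_ mstar).
  by rewrite !inE HmM Hzm ?eqxx.
apply/eqP/setP => m; rewrite !inE Hchy; case Hm: (m \in M) => //=.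
by rewrite Hzm // eqxx.
Qed.
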